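(* Let $r\geq 3$. If a $3$-connected $r$-graph $G$ has a $3$-vertex-cut $S$ such that $G-S$ contains at least three components of odd order, then either $G$ has a non-trivial tight edge-cut or the underlying simple graph $G_s$ is isomorphic to $K_{3,3}$.
   Context: Graphs are finite, may have parallel edges but no loops. $\partial_G(X)$ is the set of edges with exactly one end in $X\subseteq V(G)$. An $r$-graph is an $r$-regular graph $G$ with $|\partial_G(X)|\geq r$ for every $X\subseteq V(G)$ of odd cardinality. An edge-cut $\partial_G(X)$ of an $r$-graph $G$ is a non-trivial tight edge-cut if $|X|$ is odd, $|\partial_G(X)|=r$, and $|X|>1$ and $|V(G)\setminus X|>1$. $G_s$ is the underlying simple graph of $G$. A $3$-vertex-cut is a set of $3$ vertices whose removal increases the number of components. *)

(* Defs.v *)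
From mathcomp Require Import all_boot.
Set Implicit Arguments. Unset Strict Implicit. Unset Printing Implicit Defensive.

(* A finite loopless multigraph on vertex set V is given by its edge
   multiplicity function m : V -> V -> nat (m x y = number of parallel
   edges between x and y). *)
Definition multigraph (V : finType) (m : V -> V -> nat) : Prop :=
  (forall x y, m x y = m y x) /\ (forall x, m x x = 0).

Section G.
Variables (V : finType) (m : V -> V -> nat).

Definition deg (x : V) : nat := \sum_(y : V) m x y.

Definition cut_size (X : {set V}) : nat :=
  \sum_(x in X) \sum_(y in ~: X) m x y.

Definition regular (r : nat) : Prop := forall x, deg x = r.

Definition r_graph (r : nat) : Prop :=
  regular r /\ forall X : {set V}, odd #|X| -> r <= cut_size X.

Definition nontrivial_tight_cut (r : nat) (X : {set V}) : Prop :=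
  [/\ odd #|X|, cut_size X = r, 1 < #|X| & 1 < #|~: X|].

Definition adj_del (S : {set V}) : rel V :=
  fun x y => [&& x \notin S, y \notin S & 0 < m x y].

Definition comp_of (S : {set V}) (x : V) : {set V} :=
  [set y | (y \notin S) && connect (adj_del S) x y].

Definition is_component (S : {set V}) (C : {set V}) : Prop :=
  exists2 x, x \notin S & C = comp_of S x.

Definition ncomp (S : {set V}) : nat :=
  #|[set C : {set V} | [exists x, (x \notin S) && (C == comp_of S x)]]|.

Definition connected_del (S : {set V}) : Prop :=
  forall x y, x \notin S -> y \notin S -> connect (adj_del S) x y.

Definition k_connected (k : nat) : Prop :=
  k < #|V| /\ forall S : {set V}, #|S| < k -> connected_del S.

Definition three_vertex_cut (S : {set V}) : Prop :=
  #|S| = 3 /\ ncomp set0 < ncomp S.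

Definition K33_adj (u v : bool * 'I_3) : bool := u.1 != v.1.

Definition simple_iso_K33 : Prop :=
  exists f : V -> bool * 'I_3,
    bijective f /\ forall x y, (0 < m x y) = K33_adj (f x) (f y).

End G.

(* Main.v *)
Require Import Defs.
From mathcomp Require Import all_boot zify.
Set Implicit Arguments. Unset Strict Implicit. Unset Printing Implicit Defensive.

Lemma closed_of (T : finType) (e : rel T) (a : {set T}) :
  symmetric e -> (forall x y, e x y -> x \in a -> y \in a) -> closed e a.
Proof.
move=> se H x y exy; apply/idP/idP; first exact: H.
by move=> ya; apply: (H y x) => //; rewrite se.
Qed.

Lemma sumU (V : finType) (A B : {set V}) (F : V -> nat) :
  [disjoint A & B] ->
  \sum_(i in A :|: B) F i = \sum_(i in A) F i + \sum_(i in B) F i.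
Proof.
move=> dAB; rewrite -bigU //; apply: eq_bigl => i; by rewrite !inE.
Qed.

Section C.
Variables (V : finType) (m : V -> V -> nat).
Hypothesis msym : forall x y, m x y = m y x.

Lemma adj_sym S : symmetric (adj_del m S).
Proof. move=> x y; rewrite /adj_del msym; by case: (x \in S); case: (y \in S). Qed.

Lemma comp_notS S x y : y \in comp_of m S x -> y \notin S.
Proof. by rewrite inE => /andP[]. Qed.

Lemma comp_closure S x y z : y \in comp_of m S x -> z \notin S -> 0 < m y z ->
  z \in comp_of m S x.
Proof.
rewrite !inE => /andP[yS cxy] zS myz; rewrite zS /=.
apply: connect_trans cxy (connect1 _); by rewrite /adj_del yS zS myz.
Qed.

Lemma comp_eq S x y : y \in comp_of m S x -> comp_of m S x = comp_of m S y.
Proof.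
rewrite inE => /andP[yS cxy]; apply/setP => z; rewrite !inE.
by rewrite (same_connect (sym_connect_sym (adj_sym S)) cxy).
Qed.

Lemma comp_disj S x1 x2 : comp_of m S x1 != comp_of m S x2 ->
  [disjoint comp_of m S x1 & comp_of m S x2].
Proof.
move=> ne; apply/pred0P => y /=; apply/negbTE/negP => /andP[y1 y2].
by move: ne; rewrite (comp_eq y1) (comp_eq y2) eqxx.
Qed.

Lemma comp_cut S x : cut_size m (comp_of m S x) =
  \sum_(y in comp_of m S x) \sum_(s in S) m y s.
Proof.
rewrite /cut_size; apply: eq_bigr => y yC.
rewrite (bigID (mem S)) /= [X in _ + X]big1 ?addn0.
  apply: eq_bigl => z; rewrite inE andbC; case zS: (z \in S) => //=.
  by apply/negP => /comp_notS; rewrite zS.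
move=> z /andP[zC zS]; apply/eqP; rewrite -leqn0 leqNgt; apply/negP => mz.
by move: zC; rewrite inE (comp_closure yC zS mz).
Qed.

End C.
Definition hidx (V : finType) (A : {set V}) (x : V) : 'I_3 := inord (index x (enum A)).

Lemma hidx_inj (V : finType) (A : {set V}) x y : #|A| = 3 -> x \in A -> y \in A ->
  hidx A x = hidx A y -> x = y.
Proof.
move=> cA xA yA /(congr1 val) /=; rewrite /hidx !inordK.
- move=> e; have xe : x \in enum A by rewrite mem_enum.
  have ye : y \in enum A by rewrite mem_enum.
  by rewrite -(nth_index x xe) e (nth_index x ye).
- by rewrite -cA cardE index_mem mem_enum.
- by rewrite -cA cardE index_mem mem_enum.
Qed.

Theorem lemma2p6 (r : nat) (V : finType) (m : V -> V -> nat) :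
  3 <= r ->
  multigraph m ->
  r_graph m r ->
  k_connected m 3 ->
  forall S : {set V},
    three_vertex_cut m S ->
    (exists C1 C2 C3 : {set V},
        [/\ is_component m S C1, is_component m S C2, is_component m S C3,
            [/\ odd #|C1|, odd #|C2| & odd #|C3|] &
            [/\ C1 != C2, C1 != C3 & C2 != C3]]) ->
    (exists X : {set V}, nontrivial_tight_cut m r X) \/ simple_iso_K33 m.
Proof.
move=> r3 [msym mxx] [reg rcut] [cardV kc] S [S3 _]
  [_ [_ [_ [[x1 x1S ->] [x2 x2S ->] [x3 x3S ->] [o1 o2 o3] [n12 n13 n23]]]]].
move: o1 o2 o3 n12 n13 n23.
set C1 := @comp_of V m S x1. set C2 := @comp_of V m S x2. set C3 := @comp_of V m S x3.
move=> o1 o2 o3 n12 n13 n23.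
set W := C1 :|: C2 :|: C3.
have d12 := comp_disj msym n12.
have d13 := comp_disj msym n13.
have d23 := comp_disj msym n23.
have dW : [disjoint C1 :|: C2 & C3].
  apply/pred0P => y /=; apply/negbTE/negP => /andP[]; rewrite in_setU => /orP[y1|y2] y3.
    by move/pred0P: d13 => /(_ y) /=; rewrite y1 y3.
  by move/pred0P: d23 => /(_ y) /=; rewrite y2 y3.
have sumW (F : V -> nat) : \sum_(y in W) F y =
   \sum_(y in C1) F y + \sum_(y in C2) F y + \sum_(y in C3) F y.
  by rewrite /W sumU // sumU.
have WnS y : y \in W -> y \notin S.
  by rewrite !in_setU => /orP[/orP[]|] /comp_notS.
pose Z := \sum_(s in S) \sum_(y | y \notin W) m s y.
have Hsum : cut_size m C1 + cut_size m C2 + cut_size m C3 + Z = 3 * r.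
  have -> : 3 * r = \sum_(s in S) deg m s.
    by rewrite (eq_bigr (fun _ => r)) ?sum_nat_const ?S3 // => s _; rewrite reg.
  rewrite /deg (eq_bigr (fun s => \sum_(y in W) m s y + \sum_(y | y \notin W) m s y)).
    rewrite big_split /= exchange_big /= /Z; congr (_ + _).
    rewrite (eq_bigr (fun y => \sum_(s in S) m y s)); last first.
      by move=> y _; apply: eq_bigr => s _; rewrite msym.
    by rewrite sumW !comp_cut.
  by move=> s _; rewrite (bigID (mem W)).
have c1r := rcut _ o1. have c2r := rcut _ o2. have c3r := rcut _ o3.
have Z0 : Z = 0.
  move: Hsum c1r c2r c3r; clearbody Z.
  move: (cut_size m C1) (cut_size m C2) (cut_size m C3) Z => a b c z; clear.
  lia.
have Zfact s y : s \in S -> y \notin W -> m s y = 0.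
  move=> sS yW; move: Z0; rewrite /Z (bigD1 s) //= (bigD1 y) //=.
  by case: (m s y).
have [ce1 ce2 ce3] : [/\ cut_size m C1 = r, cut_size m C2 = r & cut_size m C3 = r].
  move: Hsum c1r c2r c3r; clear Zfact Z0; clearbody Z.
  move: (cut_size m C1) (cut_size m C2) (cut_size m C3) Z => a b c z; clear.
  by move=> *; split; lia.
have tight C x : C = comp_of m S x -> odd #|C| -> cut_size m C = r -> 1 < #|C| ->
    nontrivial_tight_cut m r C.
  move=> eC oC cC gC; split => //; apply: leq_trans (_ : 3 <= _) => //.
  rewrite -S3; apply: subset_leq_card; apply/subsetP => y yS.
  rewrite in_setC eC; apply/negP => /comp_notS; by rewrite yS.
case: (ltnP 1 #|C1|) => g1; first by left; exists C1; exact: (tight _ x1).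
case: (ltnP 1 #|C2|) => g2; first by left; exists C2; exact: (tight _ x2).
case: (ltnP 1 #|C3|) => g3; first by left; exists C3; exact: (tight _ x3).
have card1 (C : {set V}) : odd #|C| -> #|C| <= 1 -> #|C| = 1.
  by case: #|C| => [|[|]].
have one (C : {set V}) : odd #|C| -> #|C| <= 1 -> forall y z, y \in C -> z \in C -> y = z.
  move=> oC lC; have /eqP/cards1P [c ->] := card1 C oC lC.
  by move=> y z; rewrite !inE => /eqP -> /eqP ->.
have x1W : x1 \in W.
  by rewrite !in_setU; apply/orP; left; apply/orP; left; rewrite inE x1S connect0.
have cover y : y \notin S -> y \in W.
  move=> yS; apply/negPn/negP => yW.
  pose U := ~: (S :|: W).
  have cU : closed (adj_del m set0) U.
    apply: closed_of (adj_sym msym set0) _ => u v /andP[_ /andP[_ muv]].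
    rewrite /U !in_setC [u \in S :|: W]in_setU [v \in S :|: W]in_setU !negb_or.
    move=> /andP[uS uW]; apply/andP; split.
    - apply/negP => vS; by move: muv; rewrite msym Zfact.
    - have mvu : 0 < m v u by rewrite msym.
      apply/negP => vW; move: vW uW; rewrite !in_setU => /orP[/orP[]|] vC;
        by rewrite (comp_closure vC uS mvu) ?orbT.
  have cyx : connect (adj_del m set0) y x1.
    by apply: (kc set0); rewrite ?cards0 ?inE.
  have := closed_connect cU cyx.
  by rewrite /U !in_setC [y \in S :|: W]in_setU [x1 \in S :|: W]in_setU (negbTE yS) (negbTE yW) x1W orbT.
have HC (C : {set V}) x : C = comp_of m S x -> odd #|C| -> #|C| <= 1 ->
    forall y z, y \in C -> z \notin S -> 0 < m y z -> False.
  move=> eC oC lC y z yC zS myz.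
  have zC : z \in C by rewrite eC; apply: comp_closure zS myz; rewrite -eC.
  by move: myz; rewrite (one C oC lC y z yC zC) mxx.
have Hsing y z : y \notin S -> z \notin S -> 0 < m y z -> False.
  move=> yS zS myz; move: (cover y yS); rewrite !in_setU => /orP[/orP[]|] yC.
  - exact: (HC C1 x1 erefl o1 g1 y z yC zS myz).
  - exact: (HC C2 x2 erefl o2 g2 y z yC zS myz).
  - exact: (HC C3 x3 erefl o3 g3 y z yC zS myz).
have posS s y : s \in S -> y \notin S -> 0 < m s y.
  move=> sS yS; rewrite lt0n; apply/negP => /eqP ms0.
  have cS' : #|S :\ s| < 3.
    by move: (cardsD1 s S); rewrite sS S3 add1n; case=> <-.
  have cys : connect (adj_del m (S :\ s)) y s.
    by apply: (kc (S :\ s)) => //; rewrite in_setD1 ?eqxx ?(negbTE yS) ?andbF.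
  have cl : closed (adj_del m (S :\ s)) [set y].
    apply: closed_of (adj_sym msym _) _ => u v /and3P[uS' vS' muv].
    rewrite !inE => /eqP eu; move: muv; rewrite eu => muv.
    case vS: (v \in S).
      move: vS'; rewrite in_setD1 vS andbT negbK => /eqP ev.
      by move: muv; rewrite ev msym ms0.
    exfalso; exact: (Hsing y v yS (negbT vS) muv).
  have := closed_connect cl cys; rewrite !inE eqxx => /esym/eqP es.
  by move: sS; rewrite es (negbTE yS).
have Hadj x y : (0 < m x y) = ((x \in S) != (y \in S)).
  case xS: (x \in S); case yS: (y \in S) => /=.
  - apply/negbTE; rewrite -leqNgt leqn0; apply/eqP; apply: Zfact xS _.
    by apply/negP => /WnS; rewrite yS.
  - by apply: posS; rewrite ?yS.
  - by rewrite msym; apply: posS; rewrite ?xS.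
  - by apply/negbTE/negP => mxy; exact: (Hsing x y (negbT xS) (negbT yS) mxy).
have eW : ~: S = W.
  apply/setP => y; rewrite in_setC; apply/idP/idP; [exact: cover | exact: WnS].
have cW : #|~: S| = 3.
  by rewrite eW -sum1_card sumW !sum1_card (card1 _ o1 g1) (card1 _ o2 g2) (card1 _ o3 g3).
right; exists (fun x => (x \in S, if x \in S then hidx S x else hidx (~: S) x)).
split; last by move=> x y; rewrite /K33_adj /= Hadj.
have finj : injective (fun x => (x \in S, if x \in S then hidx S x else hidx (~: S) x)).
  move=> x y [exy]; rewrite exy; case: (boolP (y \in S)) => yS e.
  - exact: (hidx_inj S3 (etrans exy yS) yS e).
  - by apply: (hidx_inj cW _ _ e); rewrite in_setC ?exy.
apply: (inj_card_bij finj).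
by rewrite card_prod card_bool card_ord -(cardsC S) S3 cW.
Qed.
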